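(* Let $P,Q\subseteq[n]$ be disjoint subsets, let $1\le k\le n$, and let $A\subseteq[n]$ be chosen uniformly at random among all subsets of size $k$. Then: (1) if $|P|\ge|Q|$ then $\mathbb{P}[|A\cap P|\ge|A\cap Q|]\ge\frac12$; (2) for all $s,t$, the events $\{|A\cap P|\ge s\}$ and $\{|A\cap Q|\le t\}$ are positively correlated, i.e. $\mathbb{P}[|A\cap P|\ge s\text{ and }|A\cap Q|\le t]\ge\mathbb{P}[|A\cap P|\ge s]\cdot\mathbb{P}[|A\cap Q|\le t]$. *)

(* Defs.v *)
(* [n] = 'I_n; A uniform among k-subsets of 'I_n. *)
From mathcomp Require Import all_boot all_order all_algebra.
Set Implicit Arguments. Unset Strict Implicit. Unset Printing Implicit Defensive.
Import GRing.Theory Num.Theory.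
Local Open Scope ring_scope.

Definition ksubsets (n k : nat) : {set {set 'I_n}} := [set A : {set 'I_n} | #|A| == k].

Definition prob_unif (n k : nat) (E : pred {set 'I_n}) : rat :=
  (#|[set A in ksubsets n k | E A]|%:R) / (#|ksubsets n k|%:R).
Arguments prob_unif n k E : clear implicits.
Arguments ksubsets n k : clear implicits.

(* Main.v *)
Require Import Defs.
From mathcomp Require Import all_boot all_order all_algebra.
From mathcomp Require Import zify ring lra.
Import GRing.Theory Num.Theory.
Set Implicit Arguments. Unset Strict Implicit.


Definition swp (n : nat) (x y z : 'I_n) : 'I_n :=
  if z == x then y else if z == y then x else z.

Lemma swpK n (x y : 'I_n) : involutive (swp x y).
Proof.
move=> z; rewrite /swp.
case: (eqVneq z x) => [->|zx].
  by rewrite eqxx; case: (eqVneq y x) => [->|yx]; rewrite ?eqxx.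
case: (eqVneq z y) => [->|zy]; first by rewrite eqxx.
by rewrite (negbTE zx) (negbTE zy).
Qed.

Lemma swp_inj n (x y : 'I_n) : injective (swp x y).
Proof. exact: inv_inj (swpK x y). Qed.

Lemma exists_inv n : forall m (P Q : {set 'I_n}), #|Q| = m -> [disjoint P & Q] ->
  m <= #|P| -> exists f : 'I_n -> 'I_n, [/\ injective f,
    (forall w, w \in Q -> f w \in P), (forall w, f w \in Q -> w \in P) &
    (forall w, w \notin P -> w \notin Q -> f w = w)].
Proof.
elim=> [|m IH] P Q cQ dPQ mP.
  exists id; split => // w; move/eqP: cQ; rewrite cards_eq0 => /eqP ->; by rewrite inE.
have /set0Pn [x xQ] : Q != set0 by rewrite -card_gt0 cQ.
have /set0Pn [y yP] : P != set0 by rewrite -card_gt0; lia.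
have xP : x \notin P by apply/negP => xP; by rewrite (disjointFr dPQ xP) in xQ.
have yQ : y \notin Q by by rewrite (disjointFr dPQ yP).
have [|||f [fi fQ fP fo]] := IH (P :\ y) (Q :\ x).
- by move: cQ; rewrite (cardsD1 x Q) xQ; lia.
- by apply: disjointW dPQ; apply: subsetDl.
- by move: mP; rewrite (cardsD1 y P) yP; lia.
have fx : f x = x by apply: fo; rewrite !inE ?negb_and ?xP ?eqxx ?orbT.
have fy : f y = y by apply: fo; rewrite !inE ?negb_and ?yQ ?eqxx ?orbT.
exists (fun z => swp x y (f z)); split.
- by move=> a b /swp_inj /fi.
- move=> w wQ; case: (eqVneq w x) => [->|wx]; first by rewrite fx /swp eqxx.
  have : f w \in P :\ y by apply: fQ; rewrite !inE wx.
  rewrite !inE => /andP[fwy fwP]; rewrite /swp (negbTE fwy).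
  have -> : (f w == x) = false by apply/negbTE/eqP => E; move: fwP; rewrite E (negbTE xP).
  done.
- move=> w; rewrite /swp.
  case: (eqVneq (f w) x) => [_|fwx]; first by rewrite (negbTE yQ).
  case: (eqVneq (f w) y) => [E _|fwy] ; first by rewrite -fy in E; rewrite (fi _ _ E).
  move=> fwQ; have : w \in P :\ y by apply: fP; rewrite !inE fwx.
  by rewrite inE => /andP[].
- move=> w wP wQ; rewrite fo ?inE ?negb_and ?wP ?wQ ?orbT //.
  rewrite /swp; have -> : (w == x) = false by apply/negbTE/eqP => E; rewrite E xQ in wQ.
  by have -> : (w == y) = false by apply/negbTE/eqP => E; rewrite E yP in wP.
Qed.

Definition HH n (P Q : {set 'I_n}) (s j : nat) : {set {set 'I_n}} :=
  [set C : {set 'I_n} | [&& C :&: Q == set0, #|C| == j & s <= #|C :&: P|]].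

Lemma noQ n (C Q : {set 'I_n}) z : C :&: Q == set0 -> z \in C -> (z \in Q) = false.
Proof. by rewrite setI_eq0 => d; apply: disjointFr. Qed.

Lemma card_pairs (T1 T2 : finType) (X : {set T1}) (Y : T1 -> {set T2}) :
  #|[set p : T1 * T2 | (p.1 \in X) && (p.2 \in Y p.1)]| = \sum_(x in X) #|Y x|.
Proof.
rewrite -sum1_card.
rewrite (eq_bigl (fun p : T1 * T2 => (p.1 \in X) && (p.2 \in Y p.1))); last first.
  by move=> p; rewrite inE.
rewrite -(pair_big_dep (fun x => x \in X) (fun x y => y \in Y x) (fun _ _ => 1)).
by apply: eq_bigr => x _; apply: sum1_card.
Qed.

Lemma pairs1 n (P Q : {set 'I_n}) s j :
  #|[set p : {set 'I_n} * 'I_n | (p.1 \in HH P Q s j) && (p.2 \in ~: Q :\: p.1)]|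
  = #|HH P Q s j| * (#|~: Q| - j).
Proof.
rewrite (card_pairs _ (fun C => ~: Q :\: C)) -sum_nat_const; apply: eq_bigr => C.
rewrite /HH inE => /and3P[hQ /eqP hc _].
rewrite cardsD -hc; congr (_ - _); apply: eq_card => z; rewrite !inE.
by case zC: (z \in C); rewrite ?(noQ hQ zC) ?andbF.
Qed.

Lemma pairs2 n (P Q : {set 'I_n}) s j :
  #|[set p : {set 'I_n} * 'I_n | (p.1 \in HH P Q s j) && (p.2 \in p.1)]|
  = #|HH P Q s j| * j.
Proof.
rewrite (card_pairs _ (fun C => C)) -sum_nat_const; apply: eq_bigr => C.
by rewrite inE => /and3P[_ /eqP hc _].
Qed.

Lemma up n (P Q : {set 'I_n}) s j :
  #|HH P Q s j| * (#|~: Q| - j) <= #|HH P Q s j.+1| * j.+1.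
Proof.
rewrite -pairs1 -pairs2.
set X1 := [set p | _]; set X2 := [set p | _].
pose f (p : {set 'I_n} * 'I_n) := (p.2 |: p.1, p.2).
have fi : {in X1 &, injective f}.
  move=> [C x] [C' x']; rewrite /f /HH !inE /= => /andP[_ /andP[xC _]] /andP[_ /andP[xC' _]] [E E2]; subst x'.
  congr (_, _); apply/setP => z; move/setP: E => /(_ z); rewrite !inE.
  case: (eqVneq z x) => [->|_] /=; [by rewrite (negbTE xC) (negbTE xC') | by []].
rewrite -(card_in_imset fi); apply: subset_leq_card; apply/subsetP => q /imsetP[[C x]].
rewrite /HH !inE /= => /andP[/and3P[hQ /eqP hc hs] /andP[xC xQ]] -> /=.
rewrite setU11 andbT cardsU1 xC hc eqxx /=; apply/andP; split.
  apply/eqP/setP => z; rewrite !inE; case: (eqVneq z x) => [->|_] /=; first by rewrite (negbTE xQ).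
  by case zC: (z \in C); rewrite ?(noQ hQ zC).
by apply: (leq_trans hs); apply: subset_leq_card; apply: setSI; apply: subsetUr.
Qed.

Lemma down n (P Q : {set 'I_n}) j :
  #|HH P Q 0 j.+1| * j.+1 <= #|HH P Q 0 j| * (#|~: Q| - j).
Proof.
rewrite -pairs1 -pairs2.
set X1 := [set p | _]; set X2 := [set p | _].
pose f (p : {set 'I_n} * 'I_n) := (p.1 :\ p.2, p.2).
have fi : {in X1 &, injective f}.
  move=> [C x] [C' x']; rewrite /f /HH !inE /= => /andP[_ xC] /andP[_ xC'] [E E2].
  by subst x'; rewrite -(setD1K xC) -(setD1K xC') E.
rewrite -(card_in_imset fi); apply: subset_leq_card; apply/subsetP => q /imsetP[[C x]].
rewrite /HH !inE /= => /andP[/and3P[hQ /eqP hc hs] xC] -> /=.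
rewrite /= (noQ hQ xC) /= andbT; apply/andP; split; last by rewrite !inE eqxx.
apply/and3P; split => //.
  apply/eqP/setP => z; rewrite !inE.
  by case zC: (z \in C); rewrite ?(noQ hQ zC) ?andbF.
by move: hc; rewrite (cardsD1 x C) xC => /eqP; rewrite eqSS.
Qed.

Lemma hsub n (P Q : {set 'I_n}) s j : #|HH P Q s j| <= #|HH P Q 0 j|.
Proof.
apply: subset_leq_card; apply/subsetP => C; rewrite /HH !inE => /and3P[a b _].
by rewrite a b.
Qed.

Lemma geq n (P Q : {set 'I_n}) j :
  #|HH P Q 0 j| * (#|~: Q| - j) = #|HH P Q 0 j.+1| * j.+1.
Proof. by apply/eqP; rewrite eqn_leq up down. Qed.

Lemma ratio n (P Q : {set 'I_n}) s j :
  #|HH P Q s j| * #|HH P Q 0 j.+1| <= #|HH P Q s j.+1| * #|HH P Q 0 j|.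
Proof.
have u := up P Q s j; have e := geq P Q j.
rewrite -(leq_pmul2r (ltn0Sn j)).
move: u e; set h := #|HH P Q s j|; set h1 := #|HH P Q s j.+1|.
set g := #|HH P Q 0 j|; set g1 := #|HH P Q 0 j.+1|; set d := _ - j.
move=> u e.
have e' : h * (g * d) = h * (g1 * j.+1) by rewrite e.
have u' : h * d * g <= h1 * j.+1 * g by rewrite leq_mul2r u orbT.
nia.
Qed.

Lemma gzero n (P Q : {set 'I_n}) i : #|HH P Q 0 i| = 0 -> #|HH P Q 0 i.+1| = 0.
Proof. by move=> h; move: (geq P Q i); rewrite h mul0n => /esym/eqP; rewrite muln_eq0 orbF => /eqP. Qed.

Lemma chain n (P Q : {set 'I_n}) s j m :
  #|HH P Q s j| * #|HH P Q 0 (j + m)| <= #|HH P Q s (j + m)| * #|HH P Q 0 j|.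
Proof.
elim: m => [|m IH]; first by rewrite addn0 mulnC.
rewrite addnS; set i := j + m in IH *.
case: (posnP #|HH P Q 0 i.+1|) => [->|g1]; first by rewrite muln0.
have gi : 0 < #|HH P Q 0 i|.
  by rewrite lt0n; apply/eqP => /gzero E; rewrite E in g1.
rewrite -(leq_pmul2r gi).
have r := ratio P Q s i.
move: IH r; set a := #|HH P Q s j|; set b := #|HH P Q 0 j|; set hi := #|HH P Q s i|.
set hi1 := #|HH P Q s i.+1|; set gi0 := #|HH P Q 0 i|; set gi1 := #|HH P Q 0 i.+1|.
move=> IH r.
have IH' : a * gi0 * gi1 <= hi * b * gi1 by rewrite leq_mul2r IH orbT.
have r' : hi * gi1 * b <= hi1 * gi0 * b by rewrite leq_mul2r r orbT.
nia.
Qed.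

Definition cntE n k (P Q : {set 'I_n}) s (S : {set 'I_n}) :=
  #|[set A : {set 'I_n} | [&& #|A| == k, s <= #|A :&: P| & A :&: Q == S]]|.

Lemma cntE_val n k (P Q : {set 'I_n}) s (S : {set 'I_n}) : [disjoint P & Q] -> S \subset Q ->
  cntE k P Q s S = if #|S| <= k then #|HH P Q s (k - #|S|)| else 0.
Proof.
move=> dPQ sSQ.
have hPQ : forall z, z \in P -> (z \in Q) = false by move=> z; apply: disjointFr.
have hS : forall z, z \in S -> z \in Q by apply/subsetP.
case: leqP => Sk; last first.
  apply/eqP; rewrite cards_eq0; apply/eqP/setP => A; rewrite !inE.
  apply/negbTE; apply/negP => /and3P[/eqP hk _ /eqP hq].
  have : #|S| <= #|A| by rewrite -hq subset_leq_card // subsetIl.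
  lia.
rewrite /cntE -(@card_in_imset _ _ (fun C => S :|: C) (HH P Q s (k - #|S|))).
  apply: eq_card => A; rewrite inE; apply/idP/imsetP.
    move=> /and3P[/eqP hk hs /eqP hq]; exists (A :\: Q); last by rewrite -hq setID.
    rewrite /HH inE; apply/and3P; split.
    - apply/eqP/setP => z; rewrite !inE; by case: (z \in Q); rewrite ?andbF.
    - move: (cardsID Q A); rewrite hq hk => E; apply/eqP; lia.
    - have -> : (A :\: Q) :&: P = A :&: P; last by [].
      apply/setP => z; rewrite !inE; case zP: (z \in P); rewrite ?andbF ?andbT ?(hPQ _ zP) //.
  move=> [C]; rewrite /HH inE => /and3P[hQ /eqP hc hs] ->.
  have dSC : S :&: C = set0.
    apply/setP => z; rewrite !inE; case zS: (z \in S) => //=; apply/negbTE/negP => zC.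
    by have := hS z zS; rewrite (noQ hQ zC).
  apply/and3P; split.
  - by rewrite cardsU dSC cards0 subn0 hc; apply/eqP; lia.
  - have -> : (S :|: C) :&: P = C :&: P; last by [].
    apply/setP => z; rewrite !inE; case zP: (z \in P); rewrite ?andbF ?andbT //.
    case zS: (z \in S) => //=; have := hS z zS; by rewrite (hPQ _ zP).
  - apply/eqP/setP => z; rewrite !inE; case zS: (z \in S) => /=; first by rewrite hS.
    case zC: (z \in C) => //=; by rewrite (noQ hQ zC).
move=> C C'; rewrite /HH !inE => /and3P[hQ _ _] /and3P[hQ' _ _] E; apply/setP => z.
move/setP: E => /(_ z); rewrite !inE.
case zC: (z \in C); case zC': (z \in C') => //=; case zS: (z \in S) => //=;
  have := hS z zS; by rewrite ?(noQ hQ zC) ?(noQ hQ' zC').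
Qed.

Lemma decomp n k (P Q : {set 'I_n}) s (c : pred nat) :
  #|[set A : {set 'I_n} | [&& #|A| == k, s <= #|A :&: P| & c #|A :&: Q|]]|
  = \sum_(S : {set 'I_n} | (S \subset Q) && c #|S|) cntE k P Q s S.
Proof.
rewrite -sum1_card.
rewrite (partition_big (fun A => A :&: Q) (fun S => (S \subset Q) && c #|S|)); last first.
  by move=> A; rewrite inE => /and3P[_ _ cA]; rewrite subsetIr cA.
apply: eq_bigr => S /andP[_ cS]; rewrite /cntE -sum1_card; apply: eq_bigl => A.
rewrite !inE; case: (eqVneq (A :&: Q) S) => [->|_]; rewrite ?cS ?eqxx ?andbT ?andbF //.
Qed.

Lemma part1 n k (P Q : {set 'I_n}) : [disjoint P & Q] -> #|Q| <= #|P| ->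
  #|[set A : {set 'I_n} | #|A| == k]| <=
  2 * #|[set A : {set 'I_n} | (#|A| == k) && (#|A :&: Q| <= #|A :&: P|)]|.
Proof.
move=> dPQ QP.
have [f [fi fQ fP _]] := exists_inv (erefl #|Q|) dPQ QP.
set G := [set A : {set 'I_n} | (#|A| == k) && (#|A :&: Q| <= #|A :&: P|)].
set B := [set A : {set 'I_n} | (#|A| == k) && (#|A :&: P| < #|A :&: Q|)].
have -> : #|[set A : {set 'I_n} | #|A| == k]| = #|G| + #|B|.
  rewrite -(cardsID [set A : {set 'I_n} | #|A :&: Q| <= #|A :&: P|]); congr (_ + _).
    by apply: eq_card => A; rewrite !inE andbC.
  by apply: eq_card => A; rewrite !inE -ltnNge andbC.
suff : #|B| <= #|G| by lia.
rewrite -(card_imset _ (imset_inj fi)); apply: subset_leq_card.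
apply/subsetP => X /imsetP[A]; rewrite !inE => /andP[/eqP hk hlt] ->.
rewrite card_imset // hk eqxx /=.
have h1 : #|A :&: Q| <= #|f @: A :&: P|.
  rewrite -(card_imset (A :&: Q) fi); apply: subset_leq_card; apply/subsetP => z.
  move=> /imsetP[w]; rewrite inE => /andP[wA wQ] ->; rewrite inE imset_f //= fQ //.
have h2 : #|f @: A :&: Q| <= #|A :&: P|.
  rewrite -(card_imset (A :&: P) fi); apply: subset_leq_card; apply/subsetP => z.
  rewrite inE => /andP[/imsetP[w wA ->] fwQ]; apply: imset_f; by rewrite inE wA fP.
exact: leq_trans h2 (leq_trans (ltnW hlt) h1).
Qed.

Lemma term n k (P Q : {set 'I_n}) s t (S S' : {set 'I_n}) : [disjoint P & Q] ->
  S \subset Q -> S' \subset Q -> #|S| <= t -> t < #|S'| ->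
  cntE k P Q s S' * cntE k P Q 0 S <= cntE k P Q s S * cntE k P Q 0 S'.
Proof.
move=> d hS hS' St tS'.
rewrite !cntE_val //.
case: (leqP #|S'| k) => S'k; last by rewrite mul0n.
have Sk : #|S| <= k by lia.
rewrite Sk.
have -> : k - #|S| = (k - #|S'|) + (#|S'| - #|S|) by lia.
exact: chain.
Qed.

Lemma split_sum n k (P Q : {set 'I_n}) s t :
  \sum_(S : {set 'I_n} | (S \subset Q) && predT #|S|) cntE k P Q s S =
  \sum_(S : {set 'I_n} | (S \subset Q) && (fun y => y <= t) #|S|) cntE k P Q s S +
  \sum_(S : {set 'I_n} | (S \subset Q) && (fun y => t < y) #|S|) cntE k P Q s S.
Proof.
rewrite (bigID (fun S : {set 'I_n} => #|S| <= t)) /=; congr (_ + _); apply: eq_bigl => S.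
  by rewrite andbT.
by rewrite andbT ltnNge.
Qed.

Lemma key n k (P Q : {set 'I_n}) s t : [disjoint P & Q] ->
  (\sum_(S : {set 'I_n} | (S \subset Q) && (fun y => t < y) #|S|) cntE k P Q s S) *
  (\sum_(S : {set 'I_n} | (S \subset Q) && (fun y => y <= t) #|S|) cntE k P Q 0 S) <=
  (\sum_(S : {set 'I_n} | (S \subset Q) && (fun y => y <= t) #|S|) cntE k P Q s S) *
  (\sum_(S : {set 'I_n} | (S \subset Q) && (fun y => t < y) #|S|) cntE k P Q 0 S).
Proof.
move=> d; rewrite !big_distrlr /=.
rewrite [X in _ <= X](exchange_big) /=.
apply: leq_sum => S' /andP[hS' tS'].
apply: leq_sum => S /andP[hS St].
move: St tS' => /= St tS'. exact: (term k s d hS hS' St tS').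
Qed.

Lemma part2 n k (P Q : {set 'I_n}) s t : [disjoint P & Q] ->
  #|[set A : {set 'I_n} | [&& #|A| == k, s <= #|A :&: P| & predT #|A :&: Q|]]| *
  #|[set A : {set 'I_n} | [&& #|A| == k, 0 <= #|A :&: P| & (fun y => y <= t) #|A :&: Q|]]|
  <= #|[set A : {set 'I_n} | [&& #|A| == k, 0 <= #|A :&: P| & predT #|A :&: Q|]]| *
  #|[set A : {set 'I_n} | [&& #|A| == k, s <= #|A :&: P| & (fun y => y <= t) #|A :&: Q|]]|.
Proof.
move=> d; rewrite (decomp k P Q s (fun y => y <= t)) (decomp k P Q 0 (fun y => y <= t)) !decomp !(split_sum _ _ _ _ t).
have := key k s t d. nia.
Qed.

Local Open Scope ring_scope.

Theorem lemma2p8 (n k : nat) (P Q : {set 'I_n})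
  (hdisj : [disjoint P & Q]) (hk1 : (1 <= k)%N) (hkn : (k <= n)%N) :
  ((#|Q| <= #|P|)%N ->
     1 / 2 <= prob_unif n k (fun A => #|A :&: Q| <= #|A :&: P|)%N)
  /\
  (forall s t : nat,
     prob_unif n k (fun A => s <= #|A :&: P|)%N
       * prob_unif n k (fun A => #|A :&: Q| <= t)%N
     <= prob_unif n k (fun A => (s <= #|A :&: P|) && (#|A :&: Q| <= t))%N).
Proof.
have N0 : (0 < #|ksubsets n k|)%N by rewrite /ksubsets card_draws card_ord bin_gt0.
have N0r : 0 < (#|ksubsets n k|%:R : rat) by rewrite ltr0n.
split.
  move=> QP; have h := part1 k hdisj QP.
  rewrite /prob_unif ler_pdivlMr //.
  have -> : #|[set A in ksubsets n k | (#|A :&: Q| <= #|A :&: P|)%N]| =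
    #|[set A : {set 'I_n} | (#|A| == k) && (#|A :&: Q| <= #|A :&: P|)%N]|.
    by apply: eq_card => A; rewrite /ksubsets !inE.
  move: h; rewrite -[X in (X <= _)%N -> _]/#|ksubsets n k|.
  move=> h; have : (#|ksubsets n k|%:R : rat) <= (2 * #|[set A : {set 'I_n} | (#|A| == k) && (#|A :&: Q| <= #|A :&: P|)%N]|)%:R by rewrite ler_nat.
  rewrite natrM; lra.
move=> s t; have h := part2 k s t hdisj.
rewrite /prob_unif.
set N := #|ksubsets n k| in N0r *.
have -> : #|[set A in ksubsets n k | (s <= #|A :&: P|)%N]| =
  #|[set A : {set 'I_n} | ([&& #|A| == k, s <= #|A :&: P| & predT #|A :&: Q|])%N]|.
  by apply: eq_card => A; rewrite /ksubsets !inE andbT.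
have -> : #|[set A in ksubsets n k | (#|A :&: Q| <= t)%N]| =
  #|[set A : {set 'I_n} | ([&& #|A| == k, 0 <= #|A :&: P| & (fun y => y <= t) #|A :&: Q|])%N]|.
  by apply: eq_card => A; rewrite /ksubsets !inE.
have -> : #|[set A in ksubsets n k | ((s <= #|A :&: P|) && (#|A :&: Q| <= t))%N]| =
  #|[set A : {set 'I_n} | ([&& #|A| == k, s <= #|A :&: P| & (fun y => y <= t) #|A :&: Q|])%N]|.
  by apply: eq_card => A; rewrite /ksubsets !inE.
have EN : N = #|[set A : {set 'I_n} | ([&& #|A| == k, 0 <= #|A :&: P| & predT #|A :&: Q|])%N]|.
  by rewrite /N; apply: eq_card => A; rewrite /ksubsets !inE leq0n !andbT.
rewrite -EN in h.
move: h; set a := #|_|; set b := #|_|; set c := #|_| => h.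
rewrite ler_pdivlMr //.
have -> : a%:R / N%:R * (b%:R / N%:R) * N%:R = (a * b)%:R / (N%:R : rat).
  rewrite natrM; field; by rewrite pnatr_eq0 -lt0n.
rewrite ler_pdivrMr // -natrM ler_nat mulnC.
nia.
Qed.
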